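(* Suppose $f$ is log-concave and symmetric about its mean, let $t\ge0$, and let $\delta$ be any non-null classifier. Let $\gamma_\mu$ be the median cost. Then the median individual's payoff from reward $r_1^*=k_1/\rho$ when complying, $-\gamma_\mu+k_1(1-F(k_1))+tF(k_1)$, is at least as high as the median individual's payoff from reward $r_0^*=k_0/\rho$ when not complying, $-k_0F(k_0)+tF(k_0)$, if and only if $\gamma_\mu\le t$.
   Context: Costs $\gamma_i\in\mathbb{R}$ of compliance are distributed according to a continuously differentiable CDF $F$ with density $f$ of full support on $\mathbb{R}$; $\gamma_\mu$ satisfies $F(\gamma_\mu)=\tfrac12$. A classifier $\delta=(\delta_1,\delta_0)\in[0,1]^2$ has responsiveness $\rho=(\delta_1+\delta_0-1)(2\phi-1)$ with $\phi\in(\tfrac12,1]$, non-null meaning $\rho\neq0$. Individuals with $d_i=1$ receive reward $r$, financed by an equal tax (budget balance), and each gets $t$ times the compliance rate $F(r\rho)$. Conditional payoffs from reward $r$: complying, $-\gamma_i+r\rho(1-F(r\rho))+tF(r\rho)$; not complying, $-r\rho F(r\rho)+tF(r\rho)$. The numbers $k_0,k_1$ are defined by $k_0=t-\frac{F(k_0)}{f(k_0)}$ and $k_1=t+\frac{1-F(k_1)}{f(k_1)}$, so $r_1^*$ and $r_0^*$ are the maximizers of the complying and non-complying conditional payoffs respectively. *)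

(* Defs.v *)
From Stdlib Require Import Reals.
From Coquelicot Require Import Coquelicot.
Open Scope R_scope.

Definition is_cdf_with_density (F f : R -> R) : Prop :=
  (forall x, is_derive F x (f x)) /\
  (forall x, continuous f x) /\
  (forall x, 0 < f x) /\
  (forall x y, x <= y -> F x <= F y) /\
  is_lim F m_infty 0 /\
  is_lim F p_infty 1.

Definition log_concave (f : R -> R) : Prop :=
  forall x y l, 0 <= l <= 1 ->
    l * ln (f x) + (1 - l) * ln (f y) <= ln (f (l * x + (1 - l) * y)).

Definition is_mean (f : R -> R) (m : R) : Prop :=
  is_RInt_gen (fun x => x * f x) (Rbar_locally m_infty) (Rbar_locally p_infty) m.

Definition symmetric_about_mean (f : R -> R) : Prop :=
  exists m, is_mean f m /\ forall x, f (m + x) = f (m - x).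

Definition responsiveness (d1 d0 phi : R) : R := (d1 + d0 - 1) * (2 * phi - 1).

(* Main.v *)
Require Import Defs.
From Stdlib Require Import Reals Lra.
From Coquelicot Require Import Coquelicot.
Open Scope R_scope.

Lemma mult_m1_pinf (y : R) : Rbar_plus (Rbar_mult (-1) p_infty) y = m_infty.
Proof. unfold Rbar_mult, Rbar_mult'. case Rle_dec; intro H; [exfalso; lra|reflexivity]. Qed.

Lemma mult_1_pinf (y : R) : Rbar_plus (Rbar_mult 1 p_infty) y = p_infty.
Proof.
  unfold Rbar_mult, Rbar_mult'. case Rle_dec; intro H; [|exfalso; lra].
  case Rle_lt_or_eq_dec; intro; [reflexivity|exfalso; lra].
Qed.

Lemma lim_shift_neg (F : R -> R) (y : R) :
  is_lim F m_infty 0 -> is_lim (fun L => F (y - L)) p_infty 0.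
Proof.
  intro H. apply is_lim_ext with (fun L => F (-1 * L + y)).
  { intro; f_equal; ring. }
  apply is_lim_comp_lin; [rewrite mult_m1_pinf; exact H | lra].
Qed.

Lemma lim_shift_pos (F : R -> R) (y : R) :
  is_lim F p_infty 1 -> is_lim (fun L => F (y + L)) p_infty 1.
Proof.
  intro H. apply is_lim_ext with (fun L => F (1 * L + y)).
  { intro; f_equal; ring. }
  apply is_lim_comp_lin; [rewrite mult_1_pinf; exact H | lra].
Qed.

Lemma mvt (g g' : R -> R) a b : a < b -> (forall x, derivable_pt_lim g x (g' x)) ->
  exists c, a < c < b /\ g b - g a = g' c * (b - a).
Proof.
  intros Hab Hd. destruct (MVT_cor2 g g' a b Hab) as [c [H1 H2]].
  { intros; apply Hd. }
  exists c; split; assumption.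
Qed.

Lemma d_neg (F f : R -> R) y L : (forall x, derivable_pt_lim F x (f x)) ->
  derivable_pt_lim (fun L => F (y - L)) L (- f (y - L)).
Proof.
  intro H.
  apply derivable_pt_lim_ext with (comp F (fct_cte y - id)%F).
  { intro; reflexivity. }
  replace (- f (y - L)) with (f ((fct_cte y - id)%F L) * (0 - 1)).
  2:{ unfold fct_cte, id, minus_fct. ring. }
  apply derivable_pt_lim_comp.
  - apply derivable_pt_lim_minus; [apply derivable_pt_lim_const|apply derivable_pt_lim_id].
  - apply H.
Qed.

Lemma d_pos (F f : R -> R) y L : (forall x, derivable_pt_lim F x (f x)) ->
  derivable_pt_lim (fun L => F (y + L)) L (f (y + L)).
Proof.
  intro H.
  apply derivable_pt_lim_ext with (comp F (fct_cte y + id)%F).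
  { intro; reflexivity. }
  replace (f (y + L)) with (f ((fct_cte y + id)%F L) * (0 + 1)).
  2:{ unfold fct_cte, id, plus_fct. ring. }
  apply derivable_pt_lim_comp.
  - apply derivable_pt_lim_plus; [apply derivable_pt_lim_const|apply derivable_pt_lim_id].
  - apply H.
Qed.

Lemma ln_le_inv a b : 0 < a -> 0 < b -> ln a <= ln b -> a <= b.
Proof.
  intros Ha Hb H. destruct (Rle_or_lt a b) as [|Hlt]; [assumption|].
  pose proof (ln_increasing b a Hb Hlt). lra.
Qed.

Lemma lc_ratio (f : R -> R) x y w : log_concave f -> (forall z, 0 < f z) ->
  x < y -> w <= 0 -> f (x + w) * f y <= f x * f (y + w).
Proof.
  intros Hlc Hpos Hxy Hw.
  destruct (Req_dec w 0) as [->|Hw0].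
  { rewrite !Rplus_0_r. lra. }
  set (l := (y - x) / (y - x - w)).
  assert (Hd : 0 < y - x - w) by lra.
  assert (Hl : 0 <= l <= 1).
  { unfold l; split.
    - apply Rdiv_le_0_compat; lra.
    - apply Rmult_le_reg_r with (y - x - w); [lra|].
      unfold Rdiv. rewrite Rmult_assoc, Rinv_l by lra. lra. }
  pose proof (Hlc (x + w) y l Hl) as H1.
  assert (Hl' : 0 <= 1 - l <= 1) by lra.
  pose proof (Hlc (x + w) y (1 - l) Hl') as H2.
  replace (l * (x + w) + (1 - l) * y) with x in H1
    by (unfold l; field; lra).
  replace ((1 - l) * (x + w) + (1 - (1 - l)) * y) with (y + w) in H2
    by (unfold l; field; lra).
  apply ln_le_inv.
  - apply Rmult_lt_0_compat; apply Hpos.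
  - apply Rmult_lt_0_compat; apply Hpos.
  - rewrite !ln_mult by apply Hpos. lra.
Qed.

Section S.
Variables (F f : R -> R).
Hypothesis HF : is_cdf_with_density F f.
Hypothesis Hlc : log_concave f.

Lemma HFd : forall x, derivable_pt_lim F x (f x).
Proof. intro x; apply is_derive_Reals; apply HF. Qed.

Lemma Hfpos : forall x, 0 < f x.
Proof. apply HF. Qed.

Lemma F_strict x y : x < y -> F x < F y.
Proof.
  intro H. destruct (mvt F f x y H HFd) as [c [_ Hc]].
  pose proof (Hfpos c). nra.
Qed.

Lemma psi_mono x y : x < y -> F x * f y <= F y * f x.
Proof.
  intro Hxy.
  set (G := fun L => f x * (F y - F (y - L)) - f y * (F x - F (x - L))).
  assert (HG : forall L, derivable_pt_lim G L (f x * f (y - L) - f y * f (x - L))).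
  { intro L. unfold G.
    apply derivable_pt_lim_ext with
      ((mult_real_fct (f x) (fct_cte (F y) - (fun L => F (y - L))))
       - (mult_real_fct (f y) (fct_cte (F x) - (fun L => F (x - L)))))%F.
    { intro; reflexivity. }
    replace (f x * f (y - L) - f y * f (x - L)) with
      (f x * (0 - - f (y - L)) - f y * (0 - - f (x - L))) by ring.
    apply derivable_pt_lim_minus; apply derivable_pt_lim_scal;
      apply derivable_pt_lim_minus; try apply derivable_pt_lim_const;
      apply d_neg; apply HFd. }
  assert (Hnn : forall L, 0 < L -> 0 <= G L).
  { intros L HL. destruct (mvt G _ 0 L HL HG) as [c [Hc Heq]].
    assert (G 0 = 0) by (unfold G; rewrite !Rminus_0_r; ring).
    pose proof (lc_ratio f x y (- c) Hlc Hfpos Hxy ltac:(lra)) as Hr.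
    replace (x + - c) with (x - c) in Hr by ring.
    replace (y + - c) with (y - c) in Hr by ring.
    assert (0 <= f x * f (y - c) - f y * f (x - c)) by lra.
    nra. }
  assert (Hlim : is_lim G p_infty (f x * (F y - 0) - f y * (F x - 0))).
  { unfold G. apply is_lim_minus'.
    - apply is_lim_ext with (fun L => f x * (F y - F (y - L))); [intro; reflexivity|].
      pose proof (is_lim_scal_l (fun L => F y - F (y - L)) (f x) p_infty (F y - 0)) as H.
      apply H. apply is_lim_minus'; [apply is_lim_const|apply lim_shift_neg; apply HF].
    - pose proof (is_lim_scal_l (fun L => F x - F (x - L)) (f y) p_infty (F x - 0)) as H.
      apply H. apply is_lim_minus'; [apply is_lim_const|apply lim_shift_neg; apply HF]. }
  pose proof (is_lim_le_loc (fun _ => 0) G p_infty 0 _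
    ltac:(exists 0; intros; apply Hnn; lra) (is_lim_const 0 p_infty) Hlim) as H.
  simpl in H. lra.
Qed.

Lemma strict_max s ks k : ks = s - F ks / f ks -> k <> ks ->
  (s - k) * F k < (s - ks) * F ks.
Proof.
  intros Hks Hne.
  set (g := fun z => (s - z) * F z).
  assert (Hg : forall z, derivable_pt_lim g z (- F z + (s - z) * f z)).
  { intro z. unfold g.
    apply derivable_pt_lim_ext with ((fct_cte s - id) * F)%F; [intro; reflexivity|].
    replace (- F z + (s - z) * f z) with ((0 - 1) * F z + (fct_cte s - id)%F z * f z)
      by (unfold fct_cte, id, minus_fct; ring).
    apply derivable_pt_lim_mult; [|apply HFd].
    apply derivable_pt_lim_minus; [apply derivable_pt_lim_const|apply derivable_pt_lim_id]. }
  pose proof (Hfpos ks) as Hfks.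
  assert (Hks' : F ks = (s - ks) * f ks).
  { rewrite Hks at 2. field. lra. }
  destruct (Rlt_or_le k ks) as [Hlt|Hle].
  - destruct (mvt g _ k ks Hlt Hg) as [c [Hc Heq]]. unfold g in Heq.
    pose proof (psi_mono c ks (proj2 Hc)) as Hp. pose proof (Hfpos c).
    (* F c * f ks <= F ks * f c = (s-ks) f ks f c, so F c <= (s-ks) f c < (s-c) f c *)
    assert (F c <= (s - ks) * f c).
    { apply Rmult_le_reg_r with (f ks); [lra|]. rewrite Hks' in Hp. nra. }
    assert (0 < - F c + (s - c) * f c) by nra.
    nra.
  - assert (Hlt : ks < k) by (destruct Hle; [assumption|congruence]).
    destruct (mvt g _ ks k Hlt Hg) as [c [Hc Heq]]. unfold g in Heq.
    pose proof (psi_mono ks c (proj1 Hc)) as Hp. pose proof (Hfpos c).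
    assert ((s - ks) * f c <= F c).
    { apply Rmult_le_reg_r with (f ks); [lra|]. rewrite Hks' in Hp. nra. }
    assert (- F c + (s - c) * f c < 0) by nra.
    nra.
Qed.

End S.

Lemma sym_F (F f : R -> R) (m : R) : is_cdf_with_density F f ->
  (forall x, f (m + x) = f (m - x)) -> forall x, F (m + x) + F (m - x) = 1.
Proof.
  intros HF Hs.
  set (K := fun x => F (m + x) + F (m - x)).
  assert (HK : forall x, derivable_pt_lim K x 0).
  { intro x. unfold K.
    apply derivable_pt_lim_ext with (plus_fct (fun x => F (m + x)) (fun x => F (m - x)));
      [intro; reflexivity|].
    replace 0 with (f (m + x) + - f (m - x)) by (rewrite Hs; ring).
    apply derivable_pt_lim_plus; [apply d_pos|apply d_neg]; apply HFd; exact HF. }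
  assert (Hc : forall x, K x = K 0).
  { intro x. destruct (Rtotal_order x 0) as [H|[H|H]].
    - destruct (mvt K (fun _ => 0) x 0 H HK) as [c [_ Hc]]. lra.
    - subst; reflexivity.
    - destruct (mvt K (fun _ => 0) 0 x H HK) as [c [_ Hc]]. lra. }
  assert (Hl : is_lim K p_infty (1 + 0)).
  { unfold K. apply is_lim_plus'; [apply lim_shift_pos|apply lim_shift_neg]; apply HF. }
  assert (Hl2 : is_lim K p_infty (K 0)).
  { apply is_lim_ext with (fun _ => K 0); [intro; symmetry; apply Hc|apply is_lim_const]. }
  apply is_lim_unique in Hl. apply is_lim_unique in Hl2. rewrite Hl in Hl2.
  injection Hl2 as Hl2. intro x. change (K x = 1). rewrite Hc. lra.
Qed.

Theorem proposition9
  (F f : R -> R) (t gmu d1 d0 phi k0 k1 : R)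
  (HF : is_cdf_with_density F f)
  (Hlc : log_concave f)
  (Hsym : symmetric_about_mean f)
  (Hmed : F gmu = 1 / 2)
  (Ht : 0 <= t)
  (Hd1 : 0 <= d1 <= 1) (Hd0 : 0 <= d0 <= 1)
  (Hphi : 1 / 2 < phi <= 1)
  (Hnonnull : responsiveness d1 d0 phi <> 0)
  (Hk0 : k0 = t - F k0 / f k0)
  (Hk1 : k1 = t + (1 - F k1) / f k1) :
  (- gmu + k1 * (1 - F k1) + t * F k1 >= - k0 * F k0 + t * F k0)
  <-> gmu <= t.
Proof.
  destruct Hsym as [m [_ Hs]].
  pose proof (sym_F F f m HF Hs) as HS.
  assert (Refl : forall x, F (2 * m - x) = 1 - F x).
  { intro x. pose proof (HS (m - x)) as H.
    replace (m + (m - x)) with (2 * m - x) in H by ring.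
    replace (m - (m - x)) with x in H by ring. lra. }
  assert (Hm : F m = 1 / 2).
  { pose proof (HS 0) as H. rewrite Rplus_0_r, Rminus_0_r in H. lra. }
  assert (Hgm : gmu = m).
  { destruct (Rtotal_order gmu m) as [H|[H|H]]; auto.
    - pose proof (F_strict F f HF gmu m H). lra.
    - pose proof (F_strict F f HF m gmu H). lra. }
  subst gmu.
  assert (Hfpos := Hfpos F f HF).
  assert (Fmono : forall x y, x <= y -> F x <= F y) by apply HF.
  set (A := (t - k0) * F k0).
  set (B := (k1 - t) * (1 - F k1)).
  assert (M1 : forall k, k <> k0 -> (t - k) * F k < A).
  { intros k Hk. apply (strict_max F f HF Hlc); assumption. }
  (* M2 via reflection *)
  assert (Hj : 2 * m - k1 = (2 * m - t) - F (2 * m - k1) / f (2 * m - k1)).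
  { rewrite Refl. replace (f (2 * m - k1)) with (f k1).
    - rewrite Hk1 at 1. field. apply Rgt_not_eq, Hfpos.
    - replace (2 * m - k1) with (m - (k1 - m)) by ring.
      rewrite <- Hs. f_equal; ring. }
  assert (M2 : forall k, k <> k1 -> (k - t) * (1 - F k) < B).
  { intros k Hk.
    pose proof (strict_max F f HF Hlc (2 * m - t) (2 * m - k1) (2 * m - k) Hj
      ltac:(intro; apply Hk; lra)) as H.
    rewrite !Refl in H. unfold B.
    replace (2 * m - t - (2 * m - k)) with (k - t) in H by ring.
    replace (2 * m - t - (2 * m - k1)) with (k1 - t) in H by ring. exact H. }
  assert (Hne : k0 <> k1).
  { intro E. pose proof (Hfpos k0).
    assert (0 < F k0 / f k0 + (1 - F k1) / f k1) as Hp.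
    { rewrite <- E.
      replace (F k0 / f k0 + (1 - F k0) / f k0) with (1 / f k0) by (field; lra).
      apply Rdiv_lt_0_compat; lra. }
    lra. }
  assert (Heq : (- m + k1 * (1 - F k1) + t * F k1) - (- k0 * F k0 + t * F k0)
                = t - m + B - A) by (unfold A, B; ring).
  split.
  - intro H. destruct (Rle_or_lt m t) as [|Hlt]; [assumption|exfalso].
    assert (A - B > t - m).
    { destruct (Rtotal_order k1 m) as [Hk|[Hk|Hk]].
      - assert ((t - k1) * F k1 <= A).
        { destruct (Req_dec k1 k0) as [E|E]; [unfold A; rewrite E; lra|].
          left; apply M1; exact E. }
        unfold B. nra.
      - assert ((t - k1) * F k1 < A) by (apply M1; congruence).
        unfold B. nra.
      - assert ((t - (2 * m - k1)) * F (2 * m - k1) <= A).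
        { destruct (Req_dec (2 * m - k1) k0) as [E|E]; [unfold A; rewrite E; lra|].
          left; apply M1; exact E. }
        rewrite Refl in H0.
        pose proof (F_strict F f HF m k1 Hk).
        unfold B. nra. }
    lra.
  - intro Hmt.
    assert (A - B <= t - m).
    { destruct (Rle_or_lt m k0) as [Hk|Hk].
      - assert ((k0 - t) * (1 - F k0) <= B).
        { destruct (Req_dec k0 k1) as [E|E]; [unfold B; rewrite E; lra|].
          left; apply M2; exact E. }
        unfold A. nra.
      - assert ((2 * m - k0 - t) * (1 - F (2 * m - k0)) <= B).
        { destruct (Req_dec (2 * m - k0) k1) as [E|E]; [unfold B; rewrite E; lra|].
          left; apply M2; exact E. }
        rewrite Refl in H.
        pose proof (F_strict F f HF k0 m Hk).
        unfold A. nra. }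
    lra.
Qed.
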